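(* Let $P \subseteq \mathbb{R}^d$ be a full-dimensional polytope and let $s_0 > 0$ be a discontinuity point of $L_P$. If $s_0$ is a left-discontinuity, then $L_P(s_0) - \lim_{s \to s_0^-} L_P(s)$ equals the number of integer points contained in the union of the front facets of $s_0 P$. If $s_0$ is a right-discontinuity, then $L_P(s_0) - \lim_{s \to s_0^+} L_P(s)$ equals the number of integer points contained in the union of the back facets of $s_0 P$.
   Context: For a polytope $P \subseteq \mathbb{R}^d$ and real $s \ge 0$, $L_P(s) = \#(sP \cap \mathbb{Z}^d)$, where $sP = \{sx : x \in P\}$. Write a full-dimensional polytope as $P = \bigcap_{i=1}^n \{x : \langle a_i, x\rangle \le b_i\}$ where $F_i = P \cap \{x : \langle a_i, x\rangle = b_i\}$, $i=1,\dots,n$, are exactly the facets of $P$. The facet $F_i$ is a front facet if $b_i > 0$ and a back facet if $b_i < 0$ (facets with $b_i=0$ are neither). For $s_0>0$, the front (resp. back) facets of $s_0P$ are the sets $s_0F_i$ with $F_i$ a front (resp. back) facet of $P$. *)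

(* Defs.v *)
From Stdlib Require Import Reals Lra Lia ZArith List Classical ClassicalEpsilon.
Import ListNotations.
Open Scope R_scope.

(* Points of R^d are functions nat -> R; only coordinates j < d matter. *)
Fixpoint dot (d : nat) (a x : nat -> R) : R :=
  match d with
  | O => 0
  | S k => dot k a x + a k * x k
  end.

Fixpoint lincomb (k : nat) (c : nat -> R) (v : nat -> nat -> R) (j : nat) : R :=
  match k with
  | O => 0
  | S m => lincomb m c v j + c m * v m j
  end.

Definition lin_indep (d k : nat) (v : nat -> nat -> R) : Prop :=
  forall c : nat -> R,
    (forall j, (j < d)%nat -> lincomb k c v j = 0) ->
    forall i, (i < k)%nat -> c i = 0.

(* S contains k+1 affinely independent points, i.e. dim aff S >= k *)
Definition affdim_ge (d : nat) (S : (nat -> R) -> Prop) (k : nat) : Prop :=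
  exists p : nat -> nat -> R,
    (forall i, (i <= k)%nat -> S (p i)) /\
    lin_indep d k (fun i j => p (Datatypes.S i) j - p O j).

Definition affdim_eq (d : nat) (S : (nat -> R) -> Prop) (k : nat) : Prop :=
  affdim_ge d S k /\ ~ affdim_ge d S (Datatypes.S k).

Definition hpoly (d n : nat) (a : nat -> nat -> R) (b : nat -> R) (x : nat -> R) : Prop :=
  forall i, (i < n)%nat -> dot d (a i) x <= b i.

Definition bounded_in (d : nat) (S : (nat -> R) -> Prop) : Prop :=
  exists M, forall x, S x -> forall j, (j < d)%nat -> Rabs (x j) <= M.

Definition full_dimensional (d : nat) (S : (nat -> R) -> Prop) : Prop :=
  affdim_ge d S d.

Definition is_face (d : nat) (P F : (nat -> R) -> Prop) : Prop :=
  exists (c : nat -> R) (delta : R),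
    (forall x, P x -> dot d c x <= delta) /\
    (forall x, F x <-> (P x /\ dot d c x = delta)).

Definition is_facet (d : nat) (P F : (nat -> R) -> Prop) : Prop :=
  is_face d P F /\ affdim_eq d F (d - 1).

Definition hfacet (d n : nat) (a : nat -> nat -> R) (b : nat -> R) (i : nat)
  (x : nat -> R) : Prop :=
  hpoly d n a b x /\ dot d (a i) x = b i.

Definition dilate (d : nat) (s : R) (S : (nat -> R) -> Prop) (x : nat -> R) : Prop :=
  exists y, S y /\ forall j, (j < d)%nat -> x j = s * y j.

(* integer point z in Z^d (list of length d), viewed in R^d *)
Definition zpt (z : list Z) : nat -> R := fun j => IZR (nth j z 0%Z).

(* cardinality of a finite set of lists (0 if infinite) *)
Definition card (S : list Z -> Prop) : nat :=
  match excluded_middle_informative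
          (exists l : list (list Z), NoDup l /\ forall z, In z l <-> S z) with
  | left H => length (proj1_sig (constructive_indefinite_description _ H))
  | right _ => O
  end.

Definition nlattice (d : nat) (S : (nat -> R) -> Prop) : nat :=
  card (fun z => length z = d /\ S (zpt z)).

Definition LP (d : nat) (P : (nat -> R) -> Prop) (s : R) : R :=
  INR (nlattice d (dilate d s P)).

(* Main.v *)
Require Import Defs.
From Stdlib Require Import Reals Lra Lia ZArith List Classical ClassicalEpsilon.
Import ListNotations.
Open Scope R_scope.

Lemma dot_ext d c x y : (forall j, (j < d)%nat -> x j = y j) -> dot d c x = dot d c y.
Proof.
  induction d; simpl; intros H; [reflexivity|].
  rewrite IHd by (intros; apply H; lia). rewrite H by lia. reflexivity.
Qed.

Lemma dot_scale d c x k : dot d c (fun j => k * x j) = k * dot d c x.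
Proof. induction d; simpl; [ring|]. rewrite IHd; ring. Qed.

Lemma dil_hpoly d n a b s x : 0 < s ->
  (dilate d s (hpoly d n a b) x <-> forall i, (i < n)%nat -> dot d (a i) x <= s * b i).
Proof.
  intros Hs; split.
  - intros [y [Hy Hx]] i Hi.
    rewrite (dot_ext d (a i) x (fun j => s * y j)) by exact Hx.
    rewrite dot_scale. apply Rmult_le_compat_l; [lra|]. apply Hy; auto.
  - intros H. exists (fun j => / s * x j). split.
    + intros i Hi. rewrite dot_scale. specialize (H i Hi).
      apply (Rmult_le_reg_l s); [lra|]. rewrite <- Rmult_assoc, Rinv_r by lra. lra.
    + intros j _. field. lra.
Qed.

Lemma dil_facet d n a b s i x : 0 < s ->
  (dilate d s (hfacet d n a b i) x <->
   (forall k, (k < n)%nat -> dot d (a k) x <= s * b k) /\ dot d (a i) x = s * b i).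
Proof.
  intros Hs; split.
  - intros [y [[Hy Hy2] Hx]].
    assert (E : forall c, dot d c x = s * dot d c y).
    { intros c. rewrite (dot_ext d c x (fun j => s * y j)) by exact Hx. apply dot_scale. }
    split.
    + intros k Hk. rewrite E. apply Rmult_le_compat_l; [lra|]. apply Hy; auto.
    + rewrite E, Hy2; reflexivity.
  - intros [H H2]. exists (fun j => / s * x j). split; [split|].
    + intros k Hk. rewrite dot_scale. specialize (H k Hk).
      apply (Rmult_le_reg_l s); [lra|]. rewrite <- Rmult_assoc, Rinv_r by lra. lra.
    + rewrite dot_scale, H2. field. lra.
    + intros j _. field. lra.
Qed.

Lemma dil_bound d s P M x : 0 < s -> (forall y, P y -> forall j, (j < d)%nat -> Rabs (y j) <= M) ->
  dilate d s P x -> forall j, (j < d)%nat -> Rabs (x j) <= s * Rmax M 0.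
Proof.
  intros Hs HM [y [Hy Hx]] j Hj. rewrite Hx by auto. rewrite Rabs_mult, Rabs_pos_eq by lra.
  apply Rmult_le_compat_l; [lra|]. specialize (HM y Hy j Hj). generalize (Rmax_l M 0); lra.
Qed.

Lemma ev_list {A : Type} (D : R -> Prop) s0 (l : list A) (P : A -> R -> Prop) (Q : A -> Prop) :
  (forall x, In x l -> exists dl, 0 < dl /\ forall s, Rabs (s - s0) < dl -> D s -> (P x s <-> Q x)) ->
  exists dl, 0 < dl /\ forall s, Rabs (s - s0) < dl -> D s -> forall x, In x l -> (P x s <-> Q x).
Proof.
  induction l as [|y l IH]; intros H.
  - exists 1; split; [lra|]. intros s _ _ x [].
  - destruct (H y (or_introl eq_refl)) as [d1 [Hd1 H1]].
    destruct IH as [d2 [Hd2 H2]]. { intros x Hx; apply H; right; auto. }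
    exists (Rmin d1 d2); split. { apply Rmin_case; lra. }
    intros s Hs Ds x [<-|Hx].
    + apply H1; auto. generalize (Rmin_l d1 d2); lra.
    + apply H2; auto. generalize (Rmin_r d1 d2); lra.
Qed.

Lemma one_left c b s0 : 0 < s0 -> exists dl, 0 < dl /\ forall s, Rabs (s - s0) < dl -> s < s0 ->
  (c <= s * b <-> c <= s0 * b /\ ~ (0 < b /\ c = s0 * b)).
Proof.
  intros Hs0. destruct (Rlt_le_dec 0 b) as [Hb|Hb].
  - destruct (Rlt_le_dec c (s0 * b)) as [Hc|Hc].
    + exists ((s0 * b - c) / b). split. { apply Rdiv_lt_0_compat; lra. }
      intros s Hs Hlt. rewrite Rabs_left in Hs by lra.
      assert (s0 - s < (s0*b - c)/b) by lra.
      assert ((s0 - s) * b < s0*b - c).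
      { apply (Rmult_lt_compat_r b) in H; auto. unfold Rdiv in H.
        rewrite Rmult_assoc, Rinv_l, Rmult_1_r in H by lra. exact H. }
      split; intros; [split; [lra| intros [_ ?]; lra]|nra].
    + exists 1. split; [lra|]. intros s Hs Hlt. split.
      * intros. nra.
      * intros [H1 H2]. exfalso. apply H2. split; lra.
  - destruct (Rle_lt_dec c (s0 * b)) as [Hc|Hc].
    + exists 1. split; [lra|]. intros s Hs Hlt.
      split; intros; [split; [lra| intros [? _]; lra]|nra].
    + destruct (Req_dec b 0) as [Hb0|Hb0].
      * subst b. exists 1. split; [lra|]. intros s _ _. split; intros; [lra|]. lra.
      * exists ((c - s0 * b) / (- b)). split. { apply Rdiv_lt_0_compat; lra. }
        intros s Hs Hlt. rewrite Rabs_left in Hs by lra.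
        assert (s0 - s < (c - s0*b)/(-b)) by lra.
        assert ((s0 - s) * (-b) < c - s0*b).
        { apply (Rmult_lt_compat_r (-b)) in H; [|lra]. unfold Rdiv in H.
          rewrite Rmult_assoc, Rinv_l, Rmult_1_r in H by lra. exact H. }
        split; intros; [nra|]. lra.
Qed.

Lemma one_right c b s0 : 0 < s0 -> exists dl, 0 < dl /\ forall s, Rabs (s - s0) < dl -> s0 < s ->
  (c <= s * b <-> c <= s0 * b /\ ~ (b < 0 /\ c = s0 * b)).
Proof.
  intros Hs0. destruct (Rlt_le_dec b 0) as [Hb|Hb].
  - destruct (Rlt_le_dec c (s0 * b)) as [Hc|Hc].
    + exists ((s0 * b - c) / (-b)). split. { apply Rdiv_lt_0_compat; lra. }
      intros s Hs Hlt. rewrite Rabs_right in Hs by lra.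
      assert (s - s0 < (s0*b - c)/(-b)) by lra.
      assert ((s - s0) * (-b) < s0*b - c).
      { apply (Rmult_lt_compat_r (-b)) in H; [|lra]. unfold Rdiv in H.
        rewrite Rmult_assoc, Rinv_l, Rmult_1_r in H by lra. exact H. }
      split; intros; [split; [lra| intros [_ ?]; lra]|nra].
    + exists 1. split; [lra|]. intros s Hs Hlt. split.
      * intros. nra.
      * intros [H1 H2]. exfalso. apply H2. split; lra.
  - destruct (Rle_lt_dec c (s0 * b)) as [Hc|Hc].
    + exists 1. split; [lra|]. intros s Hs Hlt.
      split; intros; [split; [lra| intros [? _]; lra]|nra].
    + destruct (Req_dec b 0) as [Hb0|Hb0].
      * subst b. exists 1. split; [lra|]. intros s _ _. split; intros; [lra|]. lra.
      * exists ((c - s0 * b) / b). split. { apply Rdiv_lt_0_compat; lra. }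
        intros s Hs Hlt. rewrite Rabs_right in Hs by lra.
        assert (s - s0 < (c - s0*b)/b) by lra.
        assert ((s - s0) * b < c - s0*b).
        { apply (Rmult_lt_compat_r b) in H; [|lra]. unfold Rdiv in H.
          rewrite Rmult_assoc, Rinv_l, Rmult_1_r in H by lra. exact H. }
        split; intros; [nra|]. lra.
Qed.

Definition dec (P : Prop) : bool := if excluded_middle_informative P then true else false.
Lemma decP P : dec P = true <-> P.
Proof. unfold dec; destruct excluded_middle_informative; split; intros; auto; discriminate. Qed.

Lemma card_filter (B : list (list Z)) (Q : list Z -> Prop) : NoDup B -> (forall z, Q z -> In z B) ->
  card Q = length (filter (fun z => dec (Q z)) B).
Proof.
  intros ND HQ. unfold card.
  destruct excluded_middle_informative as [Hex|Hn].
  - destruct (constructive_indefinite_description _ Hex) as [l [Hl Hl2]]; simpl.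
    apply Nat.le_antisymm; apply NoDup_incl_length; auto using NoDup_filter; intros z Hz.
    + apply filter_In. split; [apply HQ, Hl2, Hz|]. apply decP, Hl2, Hz.
    + apply filter_In in Hz as [_ Hz]. apply Hl2, decP, Hz.
  - exfalso. apply Hn. exists (filter (fun z => dec (Q z)) B). split; [apply NoDup_filter; auto|].
    intros z; rewrite filter_In; split; [intros [_ H]; apply decP, H|]. intros H; split; auto. apply decP; auto.
Qed.

Lemma len_split (B : list (list Z)) (Q G : list Z -> Prop) :
  length (filter (fun z => dec (Q z)) B) =
  (length (filter (fun z => dec (Q z /\ ~ G z)) B) + length (filter (fun z => dec (Q z /\ G z)) B))%nat.
Proof.
  induction B as [|z B IH]; simpl; auto.
  pose proof (decP (Q z)) as H1; pose proof (decP (Q z /\ ~ G z)) as H2; pose proof (decP (Q z /\ G z)) as H3.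
  destruct (dec (Q z)); destruct (dec (Q z /\ ~ G z)); destruct (dec (Q z /\ G z)); simpl; rewrite IH;
  try lia; exfalso; destruct (classic (G z)); destruct (classic (Q z)); firstorder congruence.
Qed.

Lemma count_main (B : list (list Z)) (Ls A0 Fr G : list Z -> Prop) : NoDup B ->
  (forall z, A0 z -> In z B) -> (forall z, Fr z <-> A0 z /\ G z) ->
  (forall z, In z B -> (Ls z <-> A0 z /\ ~ G z)) -> (forall z, Ls z -> In z B) ->
  INR (card Ls) = INR (card A0) - INR (card Fr).
Proof.
  intros ND HA HF HL HLB.
  rewrite (card_filter B Ls), (card_filter B A0), (card_filter B Fr); auto.
  2:{ intros z Hz; apply HA, HF, Hz. }
  rewrite (len_split B A0 G).
  rewrite (filter_ext_in (fun z => dec (Ls z)) (fun z => dec (A0 z /\ ~ G z)) B).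
  2:{ intros z Hz. unfold dec. destruct excluded_middle_informative; destruct excluded_middle_informative;
      auto; exfalso; firstorder. }
  rewrite (filter_ext_in (fun z => dec (Fr z)) (fun z => dec (A0 z /\ G z)) B).
  2:{ intros z Hz. unfold dec. destruct excluded_middle_informative; destruct excluded_middle_informative;
      auto; exfalso; firstorder. }
  rewrite plus_INR. ring.
Qed.

Definition range (K : nat) : list Z := map (fun i => (Z.of_nat i - Z.of_nat K)%Z) (seq 0 (2*K+1)).
Fixpoint boxl (K d : nat) : list (list Z) :=
  match d with O => [nil] | S d' => flat_map (fun k => map (cons k) (boxl K d')) (range K) end.

Lemma in_range K k : (- Z.of_nat K <= k <= Z.of_nat K)%Z -> In k (range K).
Proof.
  intros H. unfold range. apply in_map_iff. exists (Z.to_nat (k + Z.of_nat K)). split.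
  - rewrite Z2Nat.id by lia. lia.
  - apply in_seq. lia.
Qed.

Lemma in_boxl K d z : length z = d -> (forall j, (j < d)%nat -> (- Z.of_nat K <= nth j z 0 <= Z.of_nat K)%Z) ->
  In z (boxl K d).
Proof.
  revert z; induction d; intros z Hl H; destruct z as [|k z]; simpl in *; try discriminate; auto.
  apply in_flat_map. exists k. split.
  - apply in_range. apply (H 0%nat); lia.
  - apply in_map. apply IHd; [lia|]. intros j Hj. apply (H (S j)); lia.
Qed.

Lemma lim_of_ev f D l x0 : (exists dl, 0 < dl /\ forall x, D x -> Rabs (x - x0) < dl -> f x = l) ->
  limit1_in f D l x0.
Proof.
  intros [dl [Hdl H]] eps Heps. exists dl. split; [lra|]. intros x [Dx Hx].
  simpl in *. unfold R_dist in *. rewrite H; auto. rewrite Rminus_diag, Rabs_R0; lra.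
Qed.

Lemma side d n a b s0 M (D : R -> Prop) (Tb : R -> Prop) :
  (forall x, hpoly d n a b x -> forall j, (j < d)%nat -> Rabs (x j) <= M) -> 0 < s0 ->
  (forall c bb, exists dl, 0 < dl /\ forall s, Rabs (s - s0) < dl -> D s ->
      (c <= s * bb <-> c <= s0 * bb /\ ~ (Tb bb /\ c = s0 * bb))) ->
  limit1_in (LP d (hpoly d n a b)) D
    (LP d (hpoly d n a b) s0 -
     INR (nlattice d (fun x => exists i, (i < n)%nat /\ Tb (b i) /\ dilate d s0 (hfacet d n a b i) x))) s0.
Proof.
  intros HM Hs0 Hone.
  destruct (INR_unbounded (2 * s0 * Rmax M 0)) as [K HK].
  set (B := nodup (list_eq_dec Z.eq_dec) (boxl K d)).
  assert (HB : forall s, 0 < s -> s <= 2 * s0 -> forall z, length z = d ->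
                 dilate d s (hpoly d n a b) (zpt z) -> In z B).
  { intros s Hs Hs2 z Hl Hz. unfold B. rewrite nodup_In. apply in_boxl; auto.
    intros j Hj. pose proof (dil_bound d s _ M _ Hs HM Hz j Hj) as Hb. unfold zpt in Hb.
    assert (s * Rmax M 0 <= 2 * s0 * Rmax M 0).
    { apply Rmult_le_compat_r; [apply Rmax_r|lra]. }
    rewrite INR_IZR_INZ in HK.
    revert Hb. unfold Rabs. destruct Rcase_abs; intros Hb.
    - split; [|apply le_IZR; lra]. apply le_IZR. rewrite opp_IZR. lra.
    - split; [|apply le_IZR; lra]. apply le_IZR. rewrite opp_IZR. lra. }
  set (G := fun z => exists i, (i < n)%nat /\ Tb (b i) /\ dot d (a i) (zpt z) = s0 * b i).
  assert (Hz : forall z, In z B -> exists dl, 0 < dl /\ forall s, Rabs (s - s0) < dl -> D s ->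
             ((length z = d /\ dilate d s (hpoly d n a b) (zpt z)) <->
              (length z = d /\ dilate d s0 (hpoly d n a b) (zpt z)) /\ ~ G z)).
  { intros z _.
    destruct (ev_list D s0 (seq 0 n) (fun i s => dot d (a i) (zpt z) <= s * b i)
                (fun i => dot d (a i) (zpt z) <= s0 * b i /\ ~ (Tb (b i) /\ dot d (a i) (zpt z) = s0 * b i)))
      as [dl [Hdl H]].
    { intros i _. apply Hone. }
    exists (Rmin dl s0). split. { apply Rmin_case; lra. }
    intros s Hs Ds.
    assert (Hs1 : Rabs (s - s0) < dl) by (generalize (Rmin_l dl s0); lra).
    assert (Hs2 : Rabs (s - s0) < s0) by (generalize (Rmin_r dl s0); lra).
    assert (Hsp : 0 < s) by (revert Hs2; unfold Rabs; destruct Rcase_abs; lra).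
    rewrite (dil_hpoly d n a b s) by auto. rewrite (dil_hpoly d n a b s0) by auto.
    specialize (H s Hs1 Ds).
    split.
    - intros [Hl Hx]. split; [split; auto|].
      + intros i Hi. apply (H i (proj2 (in_seq _ _ _) (conj (Nat.le_0_l i) Hi))). apply Hx; auto.
      + intros [i [Hi [Ht He]]].
        apply (proj1 (H i (proj2 (in_seq _ _ _) (conj (Nat.le_0_l i) Hi))) (Hx i Hi)). auto.
    - intros [[Hl Hx] Hg]. split; auto. intros i Hi.
      apply (H i (proj2 (in_seq _ _ _) (conj (Nat.le_0_l i) Hi))). split; auto.
      intros [Ht He]. apply Hg. exists i; auto. }
  destruct (ev_list D s0 B (fun z s => length z = d /\ dilate d s (hpoly d n a b) (zpt z))
              (fun z => (length z = d /\ dilate d s0 (hpoly d n a b) (zpt z)) /\ ~ G z) Hz)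
    as [dl [Hdl H]].
  apply lim_of_ev. exists (Rmin dl s0). split. { apply Rmin_case; lra. }
  intros s Ds Hs.
  assert (Hs1 : Rabs (s - s0) < dl) by (generalize (Rmin_l dl s0); lra).
  assert (Hs2 : Rabs (s - s0) < s0) by (generalize (Rmin_r dl s0); lra).
  assert (Hsp : 0 < s) by (revert Hs2; unfold Rabs; destruct Rcase_abs; lra).
  assert (Hsq : s <= 2 * s0) by (revert Hs2; unfold Rabs; destruct Rcase_abs; lra).
  unfold LP, nlattice.
  apply count_main with (B := B) (G := G).
  - apply NoDup_nodup.
  - intros z [Hl Hx]. apply (HB s0); auto; lra.
  - intros z. split.
    + intros [Hl [i [Hi [Ht Hf]]]]. apply dil_facet in Hf; auto. destruct Hf as [Hf1 Hf2].
      split; [split; auto; apply dil_hpoly; auto|]. exists i; auto.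
    + intros [[Hl Hx] [i [Hi [Ht He]]]]. split; auto. exists i. split; auto. split; auto.
      apply dil_facet; auto. split; auto. apply dil_hpoly; auto.
  - intros z Hzb. apply H; auto.
  - intros z [Hl Hx]. apply (HB s); auto.
Qed.

Theorem lemma3p1 (d n : nat) (a : nat -> nat -> R) (b : nat -> R) (s0 : R) :
  bounded_in d (hpoly d n a b) ->
  full_dimensional d (hpoly d n a b) ->
  (forall i, (i < n)%nat -> is_facet d (hpoly d n a b) (hfacet d n a b i)) ->
  (forall G, is_facet d (hpoly d n a b) G ->
     exists i, (i < n)%nat /\ forall x, G x <-> hfacet d n a b i x) ->
  0 < s0 ->
  (* left-discontinuity *)
  (~ limit1_in (LP d (hpoly d n a b)) (fun s => 0 <= s /\ s < s0)
       (LP d (hpoly d n a b) s0) s0 ->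
   limit1_in (LP d (hpoly d n a b)) (fun s => 0 <= s /\ s < s0)
     (LP d (hpoly d n a b) s0 -
      INR (nlattice d (fun x => exists i, (i < n)%nat /\ 0 < b i /\
                                   dilate d s0 (hfacet d n a b i) x))) s0) /\
  (* right-discontinuity *)
  (~ limit1_in (LP d (hpoly d n a b)) (fun s => s0 < s)
       (LP d (hpoly d n a b) s0) s0 ->
   limit1_in (LP d (hpoly d n a b)) (fun s => s0 < s)
     (LP d (hpoly d n a b) s0 -
      INR (nlattice d (fun x => exists i, (i < n)%nat /\ b i < 0 /\
                                   dilate d s0 (hfacet d n a b i) x))) s0).
Proof.
  intros [M HM] _ _ _ Hs0. split; intros _.
  - apply (side d n a b s0 M _ (fun bb => 0 < bb)); auto.
    intros c bb. destruct (one_left c bb s0 Hs0) as [dl [Hdl H]]. exists dl; split; auto.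
    intros s Hs [_ Ds]. apply H; auto.
  - apply (side d n a b s0 M _ (fun bb => bb < 0)); auto.
    intros c bb. apply one_right; auto.
Qed.
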